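(* Let $\mathcal C,\mathcal D$ be parsummable categories, $F\colon\mathcal C\to\mathcal D$ a sum-preserving functor of underlying categories, and $\mu\colon\mathbf 2\times\omega\to\omega$ a fixed injection. Then: (1) the functor $F_\mu$ preserves sums, so that $\mathrm{Cyl}(F)=(F_\mu)_*(\mathcal C\times\mathcal D)$ is a well-defined parsummable category, and $I^{(1)}\colon\mathcal C\to\mathrm{Cyl}(F)$ and $I^{(2)}\colon\mathcal D\to\mathrm{Cyl}(F)$ are morphisms of parsummable categories; (2) $I^{(1)}$ is an underlying equivalence of categories if $F$ is an equivalence of categories; (3) $I^{(2)}$ is an underlying equivalence of categories.
   Context: Let $\omega=\{1,2,\dots\}$, $\mathcal M$ the monoid of injections $\omega\to\omega$, $E\mathcal M$ the category with objects $\mathcal M$ and unique morphisms between any two objects. A parsummable category is a small $E\mathcal M$-category $\mathcal C$ (strict action; $u_*$ the action of $u$; $u^X_\circ\colon X\to u_*X$ and more generally $[v,u]\colon u_*\Rightarrow v_*$ the induced isomorphisms) in which every object $X$ has finite support $\mathrm{supp}(X)$ (the intersection of finite $A\subset\omega$ with $u_*X=X$ for all $u$ fixing $A$ pointwise), equipped with an object $0$ of empty support and a functor $+$ on the full subcategory $\mathcal C\boxtimes\mathcal C\subset\mathcal C\times\mathcal C$ of disjointly supported pairs that is strictly unital, associative, commutative and $E\mathcal M$-equivariant; morphisms are strictly equivariant functors preserving $0,+$. The product $\mathcal C\times\mathcal D$ of parsummable categories is a parsummable category with componentwise action and sum. For an injection $\phi\colon A\times\omega\to\omega$, $\phi_*(X_\bullet)=\sum_a\phi(a,-)_*(X_a)$;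 write $\mu_*\colon\mathcal D\times\mathcal D\to\mathcal D$. A functor $G\colon\mathcal C\to\mathcal D$ of underlying categories preserves sums if $G(0)=0$, $G\times G$ maps $\mathcal C\boxtimes\mathcal C$ into $\mathcal D\boxtimes\mathcal D$, and $G$ commutes with $+$ on objects and morphisms. For such $G$, $G_*\mathcal C$ is the parsummable category with objects those of $\mathcal C$, $\mathrm{Hom}_{G_*\mathcal C}(X,Y)=\mathrm{Hom}_{\mathcal D}(GX,GY)$, $\mathcal M$-action on objects from $\mathcal C$, structure isomorphisms $G(u^X_\circ)$, sum of objects from $\mathcal C$ and of morphisms from $\mathcal D$; $I\colon\mathcal C\to G_*\mathcal C$ is the identity on objects and $f\mapsto G(f)$ on morphisms. $F_\mu=\mu_*\circ(F\times\mathrm{id})\colon\mathcal C\times\mathcal D\to\mathcal D$; $\mathrm{Cyl}(F)=(F_\mu)_*(\mathcal C\times\mathcal D)$; $I^{(1)}=I\circ(-,0)\colon\mathcal C\to\mathrm{Cyl}(F)$ and $I^{(2)}=I\circ(0,-)\colon\mathcal D\to\mathrm{Cyl}(F)$. *)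

(* Defs.v *)
(* Raw data and the axioms are kept
   separate (raw records + Prop predicates), so that constructions such as
   G_*C, C x D, Cyl(F) can be written down as data and their being
   parsummable categories becomes a provable statement. *)
From mathcomp Require Import all_boot.
From Stdlib Require ClassicalEpsilon.

Set Implicit Arguments.
Unset Strict Implicit.
Unset Printing Implicit Defensive.

(* omega = {1,2,...} is relabelled as nat = {0,1,...} (n |-> n+1). *)
Record injw := Injw { ifun :> nat -> nat; ifun_inj : injective ifun }.

Lemma idw_inj : injective (fun n : nat => n). Proof. by []. Qed.
Definition idw : injw := Injw idw_inj.

Lemma compw_inj (u v : injw) : injective (fun n => u (v n)).
Proof. by move=> x y /(@ifun_inj u) /(@ifun_inj v). Qed.
Definition compw (u v : injw) : injw := Injw (@compw_inj u v).

Record injw2 := Injw2 { mfun :> 'I_2 * nat -> nat; mfun_inj : injective mfun }.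

Lemma slice_inj (m : injw2) (a : 'I_2) : injective (fun n => m (a, n)).
Proof. by move=> x y /(@mfun_inj m) [] ->. Qed.
Definition slice (m : injw2) (a : 'I_2) : injw := Injw (@slice_inj m a).

Definition i0 : 'I_2 := ord0.
Definition i1 : 'I_2 := ord_max.

Record cat := Cat {
  Ob : Type;
  Mor : Type;
  dom : Mor -> Ob;
  cod : Mor -> Ob;
  idm : Ob -> Mor;
  cmp : Mor -> Mor -> Mor   (* cmp g f = g o f *) }.
Arguments dom {c}. Arguments cod {c}. Arguments idm {c}. Arguments cmp {c}.

Record is_cat (C : cat) : Prop := {
  dom_id : forall X : Ob C, dom (idm X) = X;
  cod_id : forall X : Ob C, cod (idm X) = X;
  dom_cmp : forall f g : Mor C, cod f = dom g -> dom (cmp g f) = dom f;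
  cod_cmp : forall f g : Mor C, cod f = dom g -> cod (cmp g f) = cod g;
  id_l : forall f : Mor C, cmp (idm (cod f)) f = f;
  id_r : forall f : Mor C, cmp f (idm (dom f)) = f;
  cmp_assoc : forall f g h : Mor C, cod f = dom g -> cod g = dom h ->
     cmp h (cmp g f) = cmp (cmp h g) f }.

Record functor (C D : cat) := Functor {
  fob :> Ob C -> Ob D;
  fmor : Mor C -> Mor D }.
Arguments fmor {C D}.

Record is_functor (C D : cat) (F : functor C D) : Prop := {
  f_dom : forall f, dom (fmor F f) = F (dom f);
  f_cod : forall f, cod (fmor F f) = F (cod f);
  f_id : forall X, fmor F (idm X) = idm (F X);
  f_cmp : forall f g, cod f = dom g -> fmor F (cmp g f) = cmp (fmor F g) (fmor F f) }.

Definition fcomp (C D E : cat) (F : functor C D) (G : functor D E) : functor C E :=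
  Functor (fun X => G (F X)) (fun f => fmor G (fmor F f)).

Definition is_iso (C : cat) (f : Mor C) : Prop :=
  exists g : Mor C, [/\ dom g = cod f, cod g = dom f,
     cmp g f = idm (dom f) & cmp f g = idm (cod f)].

Definition nat_iso (C D : cat) (F G : functor C D) (a : Ob C -> Mor D) : Prop :=
  (forall X, [/\ dom (a X) = F X, cod (a X) = G X & is_iso (a X)]) /\
  (forall f, cmp (a (cod f)) (fmor F f) = cmp (fmor G f) (a (dom f))).

Definition fid (C : cat) : functor C C := Functor (fun X => X) (fun f => f).

Definition is_equiv (C D : cat) (F : functor C D) : Prop :=
  is_functor F /\
  exists G : functor D C, is_functor G /\
    (exists a, nat_iso (fcomp F G) (fid C) a) /\
    (exists b, nat_iso (fcomp G F) (fid D) b).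

Record pcat := PCat {
  pc :> cat;
  pact : injw -> Ob pc -> Ob pc;
  pactm : injw -> injw -> Mor pc -> Mor pc;      (* EM x C -> C on (u -> v, f) *)
  pzero : Ob pc;
  psum : Ob pc -> Ob pc -> Ob pc;
  psumm : Mor pc -> Mor pc -> Mor pc }.
Arguments pact {p}. Arguments pactm {p}. Arguments pzero {p}.
Arguments psum {p}. Arguments psumm {p}.

Definition supported_on (C : pcat) (X : Ob C) (A : seq nat) : Prop :=
  forall u : injw, (forall a, a \in A -> u a = a) -> pact u X = X.
Definition in_supp (C : pcat) (X : Ob C) (n : nat) : Prop :=
  forall A, supported_on X A -> n \in A.
(* (X, Y) is an object of C [x] C *)
Definition disj (C : pcat) (X Y : Ob C) : Prop :=
  forall n, ~ (in_supp X n /\ in_supp Y n).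

Record is_pcat (C : pcat) : Prop := {
  pc_cat : is_cat C;
  act_dom : forall u v (f : Mor C), dom (pactm u v f) = pact u (dom f);
  act_cod : forall u v (f : Mor C), cod (pactm u v f) = pact v (cod f);
  act_idm : forall u (X : Ob C), pactm u u (idm X) = idm (pact u X);
  act_cmp : forall u v w (f g : Mor C), cod f = dom g ->
     cmp (pactm v w g) (pactm u v f) = pactm u w (cmp g f);
  act_unit_ob : forall X : Ob C, pact idw X = X;
  act_unit_mor : forall f : Mor C, pactm idw idw f = f;
  act_assoc_ob : forall u v (X : Ob C), pact u (pact v X) = pact (compw u v) X;
  act_assoc_mor : forall u u' v v' (f : Mor C),
     pactm u u' (pactm v v' f) = pactm (compw u v) (compw u' v') f;
  fin_supp : forall X : Ob C, exists A, supported_on X A;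
  zero_supp : forall n, ~ in_supp (pzero : Ob C) n;
  sum_dom : forall f g : Mor C, disj (dom f) (dom g) -> disj (cod f) (cod g) ->
     dom (psumm f g) = psum (dom f) (dom g);
  sum_cod : forall f g : Mor C, disj (dom f) (dom g) -> disj (cod f) (cod g) ->
     cod (psumm f g) = psum (cod f) (cod g);
  sum_idm : forall X Y : Ob C, disj X Y -> psumm (idm X) (idm Y) = idm (psum X Y);
  sum_cmp : forall f g f' g' : Mor C, cod f = dom f' -> cod g = dom g' ->
     disj (dom f) (dom g) -> disj (cod f) (cod g) -> disj (cod f') (cod g') ->
     psumm (cmp f' f) (cmp g' g) = cmp (psumm f' g') (psumm f g);
  sum_unit_ob : forall X : Ob C, psum X pzero = X;
  sum_unit_mor : forall f : Mor C, psumm f (idm pzero) = f;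
  sum_assoc_ob : forall X Y Z : Ob C, disj X Y -> disj Y Z -> disj X Z ->
     psum (psum X Y) Z = psum X (psum Y Z);
  sum_assoc_mor : forall f g h : Mor C,
     disj (dom f) (dom g) -> disj (dom g) (dom h) -> disj (dom f) (dom h) ->
     disj (cod f) (cod g) -> disj (cod g) (cod h) -> disj (cod f) (cod h) ->
     psumm (psumm f g) h = psumm f (psumm g h);
  sum_comm_ob : forall X Y : Ob C, disj X Y -> psum X Y = psum Y X;
  sum_comm_mor : forall f g : Mor C, disj (dom f) (dom g) -> disj (cod f) (cod g) ->
     psumm f g = psumm g f;
  sum_act_ob : forall u (X Y : Ob C), disj X Y ->
     pact u (psum X Y) = psum (pact u X) (pact u Y);
  sum_act_mor : forall u v (f g : Mor C), disj (dom f) (dom g) -> disj (cod f) (cod g) ->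
     pactm u v (psumm f g) = psumm (pactm u v f) (pactm u v g) }.

Definition is_pmorph (C D : pcat) (H : functor C D) : Prop :=
  is_functor H /\
  [/\ forall u (X : Ob C), H (pact u X) = pact u (H X),
      forall u v (f : Mor C), fmor H (pactm u v f) = pactm u v (fmor H f),
      H pzero = pzero,
      forall X Y : Ob C, disj X Y -> H (psum X Y) = psum (H X) (H Y) &
      forall f g : Mor C, disj (dom f) (dom g) -> disj (cod f) (cod g) ->
        fmor H (psumm f g) = psumm (fmor H f) (fmor H g)].

Definition preserves_sums (C D : pcat) (G : functor C D) : Prop :=
  [/\ G pzero = pzero,
      forall X Y : Ob C, disj X Y -> disj (G X) (G Y),
      forall X Y : Ob C, disj X Y -> G (psum X Y) = psum (G X) (G Y) &
      forall f g : Mor C, disj (dom f) (dom g) -> disj (cod f) (cod g) ->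
        fmor G (psumm f g) = psumm (fmor G f) (fmor G g)].

Definition prod_cat (C D : cat) : cat :=
  @Cat (Ob C * Ob D)%type (Mor C * Mor D)%type
    (fun f => (dom f.1, dom f.2)) (fun f => (cod f.1, cod f.2))
    (fun X => (idm X.1, idm X.2)) (fun g f => (cmp g.1 f.1, cmp g.2 f.2)).

Definition prod_pcat (C D : pcat) : pcat :=
  @PCat (prod_cat C D)
    (fun u X => (pact u X.1, pact u X.2))
    (fun u v f => (pactm u v f.1, pactm u v f.2))
    (pzero, pzero)
    (fun X Y => (psum X.1 Y.1, psum X.2 Y.2))
    (fun f g => (psumm f.1 g.1, psumm f.2 g.2)).

(* choose x if it satisfies P, otherwise the default d (junk, only used
   on arguments outside the intended domain, e.g. non-composable pairs) *)
Definition mkv (T : Type) (P : T -> Prop) (x : T) (d : {y | P y}) : {y | P y} :=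
  match ClassicalEpsilon.excluded_middle_informative (P x) with
  | left p => exist P x p
  | right _ => d
  end.

(* a morphism X -> Y of G_*C is a morphism G X -> G Y of D *)
Definition valid_push (C D : cat) (G : functor C D) (t : Ob C * Ob C * Mor D) : Prop :=
  dom t.2 = G t.1.1 /\ cod t.2 = G t.1.2.

Definition push_cat (C D : cat) (G : functor C D) (hD : is_cat D) : cat :=
  @Cat (Ob C) {t | valid_push G t}
    (fun t => (sval t).1.1) (fun t => (sval t).1.2)
    (fun X => exist (valid_push G) (X, X, idm (G X))
                    (conj (dom_id hD (G X)) (cod_id hD (G X))))
    (fun t s => mkv ((sval s).1.1, (sval t).1.2, cmp (sval t).2 (sval s).2) s).

(* u^X_o := [u, 1]_X : X = 1_* X -> u_* X ; its inverse is [1, u]_X *)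
Definition circ (C : pcat) (u : injw) (X : Ob C) : Mor C := pactm idw u (idm X).
Definition circinv (C : pcat) (u : injw) (X : Ob C) : Mor C := pactm u idw (idm X).

(* G_* C: action on objects from C, structure isomorphisms G(u^X_o), so the
   EM-action on a morphism f : X -> Y (i.e. f : GX -> GY in D) along u -> v is
   G(v^Y_o) o f o G(u^X_o)^{-1}; 0 and sums of objects from C, sums of
   morphisms from D. *)
Definition push (C D : pcat) (G : functor C D) (hD : is_cat D) : pcat :=
  @PCat (push_cat G hD)
    (fun u X => pact u X)
    (fun u v t => mkv (pact u (sval t).1.1, pact v (sval t).1.2,
                       cmp (fmor G (circ v (sval t).1.2))
                           (cmp (sval t).2 (fmor G (circinv u (sval t).1.1))))
                      t)
    (pzero : Ob C)
    (fun X Y => psum X Y)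
    (fun s t => mkv (psum (sval s).1.1 (sval t).1.1, psum (sval s).1.2 (sval t).1.2,
                     psumm (sval s).2 (sval t).2) s).

Definition push_I (C D : pcat) (G : functor C D) (hD : is_cat D) :
    functor C (push G hD) :=
  @Functor C (push_cat G hD) (fun X => X)
    (fun f => mkv (dom f, cod f, fmor G f) (@idm (push_cat G hD) (dom f))).

(* F_mu = mu_* o (F x id) : C x D -> D *)
Definition Fmu (C D : pcat) (F : functor C D) (m : injw2) : functor (prod_pcat C D) D :=
  @Functor (prod_pcat C D) D
    (fun X => psum (pact (slice m i0) (F X.1)) (pact (slice m i1) X.2))
    (fun f => psumm (pactm (slice m i0) (slice m i0) (fmor F f.1))
                    (pactm (slice m i1) (slice m i1) f.2)).

Definition Cyl (C D : pcat) (F : functor C D) (m : injw2) (hD : is_cat D) : pcat :=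
  push (Fmu F m) hD.

Definition incl1 (C D : pcat) : functor C (prod_pcat C D) :=
  @Functor C (prod_pcat C D) (fun X => (X, pzero)) (fun f => (f, idm pzero)).
Definition incl2 (C D : pcat) : functor D (prod_pcat C D) :=
  @Functor D (prod_pcat C D) (fun Y => (pzero, Y)) (fun g => (idm pzero, g)).

Definition I1 (C D : pcat) (F : functor C D) (m : injw2) (hD : is_cat D) :
    functor C (Cyl F m hD) :=
  fcomp (incl1 C D) (push_I (Fmu F m) hD).
Definition I2 (C D : pcat) (F : functor C D) (m : injw2) (hD : is_cat D) :
    functor D (Cyl F m hD) :=
  fcomp (incl2 C D) (push_I (Fmu F m) hD).

(* Main.v *)
Require Import Defs.
From mathcomp Require Import all_boot.
From mathcomp Require Import zify.
From Stdlib Require Import ProofIrrelevance FunctionalExtensionality Classical.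

Set Implicit Arguments.
Unset Strict Implicit.
Unset Printing Implicit Defensive.


Lemma injw_eq (u v : injw) : u =1 v -> u = v.
Proof.
case: u => f hf; case: v => g hg /= e.
have efg : f = g by apply: functional_extensionality.
subst g; f_equal; apply: proof_irrelevance.
Qed.

Lemma sig_eq (T : Type) (P : T -> Prop) (x y : {z | P z}) : sval x = sval y -> x = y.
Proof. case: x => a pa; case: y => b pb /= e; subst b; f_equal; apply: proof_irrelevance. Qed.

Lemma mkv_val T (P : T -> Prop) x d : P x -> sval (@mkv T P x d) = x.
Proof. rewrite /mkv; case: ClassicalEpsilon.excluded_middle_informative => //. Qed.

Lemma foldr_max_ub (s : seq nat) x : x \in s -> x <= foldr maxn 0 s.
Proof.
elim: s => //= y s IH; rewrite in_cons => /orP [/eqP->|/IH h]; first exact: leq_maxl.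
exact: leq_trans h (leq_maxr _ _).
Qed.

Section Ext.
Variables (A : seq nat) (f : nat -> nat).
Hypothesis finj : {in A &, injective f}.
Let E := map f A.
Let M := (foldr maxn 0 (A ++ E)).+1.
Let ltM x : x \in A ++ E -> x < M.
Proof. by move=> h; rewrite ltnS foldr_max_ub. Qed.
Let ltMA x : x \in A -> x < M.
Proof. by move=> h; apply: ltM; rewrite mem_cat h. Qed.
Let ltME x : x \in E -> x < M.
Proof. by move=> h; apply: ltM; rewrite mem_cat h orbT. Qed.
Let K := [seq k <- iota 0 M | k \notin A].
Let L := [seq k <- iota 0 M | k \notin E].
Let uK : uniq K. Proof. exact/filter_uniq/iota_uniq. Qed.
Let uL : uniq L. Proof. exact/filter_uniq/iota_uniq. Qed.
Let inK k : (k \in K) = (k \notin A) && (k < M).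
Proof. by rewrite mem_filter mem_iota add0n. Qed.
Let inL k : (k \in L) = (k \notin E) && (k < M).
Proof. by rewrite mem_filter mem_iota add0n. Qed.

Definition extf n := if n \in A then f n else if n < M then M + index n K
  else if n - M < size L then nth 0 L (n - M) else M + size K + (n - M - size L).

Let cls n := if n \in A then 0 else if n < M then 1 else if n - M < size L then 2 else 3.
Let clv v := if v < M then (if v \in E then 0 else 2) else if v < M + size K then 1 else 3.

Let cl_ext n : clv (extf n) = cls n.
Proof.
rewrite /cls /extf.
case nA: (n \in A).
  have fE : f n \in E by rewrite /E; apply: map_f.
  by rewrite /clv ltME // fE.
case nM: (n < M).
  have nK : n \in K by rewrite inK nA nM.
  have := index_mem n K; rewrite nK => iK.
  rewrite /clv.
  have -> : (M + index n K < M) = false by apply/negbTE; lia.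
  by rewrite ltn_add2l iK.
case nL: (n - M < size L).
  have : nth 0 L (n - M) \in L by apply: mem_nth.
  by rewrite inL /clv => /andP [/negbTE -> ->].
rewrite /clv.
have -> : (M + size K + (n - M - size L) < M) = false by apply/negbTE; lia.
have -> // : (M + size K + (n - M - size L) < M + size K) = false by apply/negbTE; lia.
Qed.

Lemma extf_inj : injective extf.
Proof.
move=> n m e.
have := cl_ext n; rewrite e cl_ext.
move: e; rewrite /extf /cls.
case nA: (n \in A); case mA: (m \in A) => //.
- by move=> e _; apply: finj.
- by case: (m < M) => //; case: (m - M < size L).
- by case: (n < M) => //; case: (n - M < size L).
case nM: (n < M); case mM: (m < M) => //.
- move=> e _.
  have nK : n \in K by rewrite inK nA nM.
  have mK : m \in K by rewrite inK mA mM.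
  have ei : index n K = index m K by lia.
  by rewrite -(nth_index 0 nK) -(nth_index 0 mK) ei.
- by case: (m - M < size L).
- by case: (n - M < size L).
case nL: (n - M < size L); case mL: (m - M < size L) => // e _.
  have : (n - M) = (m - M) by apply/eqP; rewrite -(nth_uniq 0 nL mL uL) e.
  lia.
lia.
Qed.

Lemma extf_A : {in A, extf =1 f}.
Proof. by move=> n nA; rewrite /extf nA. Qed.

Lemma extf_cov n : n \notin E -> exists k, extf k = n.
Proof.
move=> nE.
have notA k : M <= k -> k \notin A.
  by move=> h; apply/negP => /ltMA; lia.
case: (ltnP n M) => nM.
  have nL : n \in L by rewrite inL nE nM.
  exists (M + index n L).
  rewrite /extf (negbTE (notA _ (leq_addr _ _))).
  have -> : (M + index n L < M) = false by apply/negbTE; lia.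
  have -> : M + index n L - M = index n L by lia.
  by rewrite index_mem nL nth_index.
case: (ltnP n (M + size K)) => nK.
  have jK : n - M < size K by lia.
  set k := nth 0 K (n - M).
  have kK : k \in K by apply: mem_nth.
  move: (kK); rewrite inK => /andP [kA kM].
  exists k; rewrite /extf (negbTE kA) kM index_uniq //; lia.
exists (n - size K + size L).
rewrite /extf (negbTE (notA _ _)); last by lia.
have -> : (n - size K + size L < M) = false by apply/negbTE; lia.
have -> : (n - size K + size L - M < size L) = false by apply/negbTE; lia.
lia.
Qed.
End Ext.

Lemma extend (A : seq nat) (f : nat -> nat) : {in A &, injective f} ->
  exists w : injw, {in A, w =1 f} /\ (forall n, n \notin map f A -> exists k, w k = n).
Proof.
move=> finj; exists (Injw (extf_inj finj)); split => /=.
  exact: extf_A.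
exact: extf_cov.
Qed.



Section Supp.
Variables (C : pcat) (hC : is_pcat C).

Lemma agree_step (X : Ob C) A (u w : injw) : supported_on X A -> {in A, u =1 w} ->
  (forall n, exists k, w k = u n) -> pact u X = pact w X.
Proof.
move=> sX ea cov.
have ex n : exists k, w k == u n by case: (cov n) => k e; exists k; apply/eqP.
pose t n := xchoose (ex n).
have tE n : w (t n) = u n by apply/eqP; exact: (xchooseP (ex n)).
have tinj : injective t.
  by move=> a b e; apply: (@ifun_inj u); rewrite -!tE e.
pose tt := Injw tinj.
have -> : u = compw w tt by apply: injw_eq => n /=; rewrite tE.
rewrite -(act_assoc_ob hC); congr pact; apply: sX => a aA /=.
by apply: (@ifun_inj w); rewrite tE ea.
Qed.

Lemma agree (X : Ob C) A (u v : injw) : supported_on X A -> {in A, u =1 v} ->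
  pact u X = pact v X.
Proof.
move=> sX ea.
have uinj : {in A &, injective u} by move=> a b _ _; apply: ifun_inj.
case: (extend uinj) => w [wA wcov].
have cover (z : injw) : {in A, z =1 u} -> forall n, exists k, w k = z n.
  move=> zA n.
  case: (boolP (z n \in map u A)) => [/mapP [a aA ->]|]; last exact: wcov.
  by exists a; rewrite wA.
have e1 : pact u X = pact w X.
  apply: (agree_step sX); first by move=> a aA; rewrite wA.
  by apply: cover.
have e2 : pact v X = pact w X.
  apply: (agree_step sX); first by move=> a aA; rewrite wA // ea.
  by apply: cover => a aA; rewrite ea.
by rewrite e1 e2.
Qed.

Lemma supp_act (X : Ob C) A u : supported_on X A -> supported_on (pact u X) (map u A).
Proof.
move=> sX w fx; rewrite (act_assoc_ob hC).
apply: (agree sX) => a aA /=; apply: fx; exact: map_f.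
Qed.

Lemma supp_inter (X : Ob C) A B : supported_on X A -> supported_on X B ->
  supported_on X [seq a <- A | a \in B].
Proof.
move=> sA sB u hu.
pose N := (foldr maxn 0 (A ++ B ++ map u A)).+1.
have ltN x : x \in A ++ B ++ map u A -> x < N by move=> h; rewrite ltnS foldr_max_ub.
have ltNA x : x \in A -> x < N by move=> h; apply: ltN; rewrite mem_cat h.
have ltNB x : x \in B -> x < N by move=> h; apply: ltN; rewrite !mem_cat h orbT.
have ltNu x : x \in A -> u x < N.
  by move=> h; apply: ltN; rewrite !mem_cat (map_f u h) !orbT.
pose g n := if n \in A then n else N + n.
have ginj : {in A ++ B &, injective g}.
  move=> a b; rewrite !mem_cat /g => ha hb.
  case aA: (a \in A); case bA: (b \in A) => //.
  - by move=> e; have := ltNA _ aA; rewrite e; lia.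
  - by move=> e; have := ltNA _ bA; rewrite -e; lia.
  - lia.
case: (extend ginj) => tau [tauE _].
have tfix : pact tau X = X.
  by apply: sA => a aA; rewrite tauE ?mem_cat ?aA // /g aA.
have stB : supported_on X (map tau B).
  by rewrite -[X in supported_on X _]tfix; apply: supp_act.
pose h n := if n \in A then u n else n.
have tauB b : b \in B -> tau b = g b by move=> bB; rewrite tauE // mem_cat bB orbT.
have hinj : {in A ++ map tau B &, injective h}.
  move=> a b; rewrite !mem_cat /h => ha hb.
  case aA: (a \in A); case bA: (b \in A) => //.
  - by move=> e; apply: ifun_inj e.
  - move: hb; rewrite bA /= => /mapP [c cB eb]; subst b; rewrite tauB // /g.
    case cA: (c \in A); first by move: bA; rewrite tauB // /g cA cA.
    by move=> e; have := ltNu _ aA; rewrite e; lia.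
  - move: ha; rewrite aA /= => /mapP [c cB ea]; subst a; rewrite tauB // /g.
    case cA: (c \in A); first by move: aA; rewrite tauB // /g cA cA.
    by move=> e; have := ltNu _ bA; rewrite -e; lia.
case: (extend hinj) => w [wE _].
have wfix : pact w X = X.
  apply: stB => x xB; rewrite wE ?mem_cat ?xB ?orbT // /h.
  case xA: (x \in A) => //.
  move: xB => /mapP [b bB eb]; move: xA; rewrite eb tauB // /g.
  case bA: (b \in A) => xA.
    by apply: hu; rewrite mem_filter bB xA.
  by have := ltNA _ xA; lia.
rewrite -[RHS]wfix; apply: (agree sA) => a aA.
by rewrite wE ?mem_cat ?aA // /h aA.
Qed.

Lemma min_supp (X : Ob C) : exists A0, supported_on X A0 /\ forall n, in_supp X n <-> n \in A0.
Proof.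
have main : forall k A, size A <= k -> supported_on X A ->
   exists A0, supported_on X A0 /\ forall a, a \in A0 -> in_supp X a.
  elim=> [|k IH] A szA sA.
    exists A; split => // a; move: szA; rewrite leqn0 => /nilP -> //.
  case: (classic (exists a, a \in A /\ ~ in_supp X a)); last first.
    move=> nex; exists A; split => // a aA; apply: NNPP => ns; apply: nex; by exists a.
  case=> a [aA na].
  have [B [sB aB]] : exists B, supported_on X B /\ a \notin B.
    apply: NNPP => nb; apply: na => B sB; apply: NNPP => aB; apply: nb.
    by exists B; split => //; apply/negP.
  apply: (IH [seq x <- A | x \in B]); last exact: supp_inter.
  rewrite size_filter -ltnS; apply: leq_trans szA.
  rewrite -(count_predC (mem B) A) -addn1 leq_add2l -has_count.
  by apply/hasP; exists a => //=.
case: (fin_supp hC X) => A sA.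
case: (main _ A (leqnn _) sA) => A0 [sA0 hA0].
exists A0; split => // n; split; first by move=> h; apply: h.
exact: hA0.
Qed.

Lemma in_supp_act (X : Ob C) u n : in_supp (pact u X) n -> exists k, in_supp X k /\ n = u k.
Proof.
case: (min_supp X) => A0 [sA0 hA0] h.
have /mapP [k kA ->] := h _ (supp_act (u:=u) sA0).
by exists k; split => //; apply/hA0.
Qed.

Lemma disj_sym (X Y : Ob C) : disj X Y -> disj Y X.
Proof. by move=> d n [h1 h2]; apply: (d n). Qed.

Lemma in_supp_sum (X Y : Ob C) n : disj X Y -> in_supp (psum X Y) n -> in_supp X n \/ in_supp Y n.
Proof.
move=> d h.
case: (min_supp X) => A [sA hA]; case: (min_supp Y) => B [sB hB].
have s : supported_on (psum X Y) (A ++ B).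
  move=> w fx; rewrite (sum_act_ob hC _ d).
  rewrite sA ?sB // => a aA; apply: fx; by rewrite mem_cat aA ?orbT.
have := h _ s; rewrite mem_cat => /orP [/hA|/hB]; by [left|right].
Qed.

Lemma zero_supp0 : supported_on (pzero : Ob C) [::].
Proof.
case: (min_supp pzero) => A [sA hA].
suff e : A = [::] by rewrite e in sA.
case: A sA hA => // a A _ hA; exfalso; apply: (zero_supp hC (n:=a)).
by apply/hA; rewrite in_cons eqxx.
Qed.

Lemma act_zero u : pact u (pzero : Ob C) = pzero.
Proof. by apply: zero_supp0. Qed.

Lemma disj0l (X : Ob C) : disj pzero X.
Proof. by move=> n [h _]; apply: (zero_supp hC h). Qed.
Lemma disj0r (X : Ob C) : disj X pzero.
Proof. by move=> n [_ h]; apply: (zero_supp hC h). Qed.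

Lemma disj_act (X Y : Ob C) u : disj X Y -> disj (pact u X) (pact u Y).
Proof.
move=> d n [/in_supp_act [k [hk ->]] /in_supp_act [j [hj e]]].
move/ifun_inj: e => e; subst j; exact: (d k).
Qed.

Lemma disj_sumr (X Y Z : Ob C) : disj X Y -> disj X Z -> disj Y Z -> disj X (psum Y Z).
Proof.
move=> dxy dxz dyz n [h /(in_supp_sum dyz) [h'|h']]; [exact: (dxy n)|exact: (dxz n)].
Qed.
Lemma disj_suml (X Y Z : Ob C) : disj X Z -> disj Y Z -> disj X Y -> disj (psum X Y) Z.
Proof. by move=> ? ? ?; apply/disj_sym/disj_sumr => //; apply: disj_sym. Qed.

Lemma sum0l (X : Ob C) : psum pzero X = X.
Proof. by rewrite (sum_comm_ob hC (disj0l (X:=X))) (sum_unit_ob hC). Qed.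

(* Eckmann-Hilton *)
Lemma actm_zero u v : pactm u v (idm (pzero : Ob C)) = idm pzero.
Proof.
have hc := pc_cat hC.
set h := pactm u v _.
have hd : dom h = pzero by rewrite (act_dom hC) (dom_id hc) act_zero.
have hcd : cod h = pzero by rewrite (act_cod hC) (cod_id hc) act_zero.
have d00 := disj0l (X:=(pzero : Ob C)).
have e1 : h = psumm h h.
  rewrite /h -(sum_act_mor hC); last 2 first.
  - by rewrite (dom_id hc).
  - by rewrite (cod_id hc).
  by rewrite (sum_idm hC d00) (sum_unit_ob hC).
have e2 : psumm h h = cmp h h.
  have -> : psumm h h = psumm (cmp h (idm pzero)) (cmp (idm pzero) h).
    by rewrite -[X in cmp h (idm X)]hd (id_r hc) -[X in cmp (idm X) h]hcd (id_l hc).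
  rewrite (sum_cmp hC); rewrite ?hd ?hcd ?(dom_id hc) ?(cod_id hc) //.
  rewrite (sum_unit_mor hC) (sum_comm_mor hC) ?hd ?hcd ?(dom_id hc) ?(cod_id hc) //.
  by rewrite (sum_unit_mor hC).
have e3 : cmp (pactm v u (idm pzero)) h = idm pzero.
  rewrite /h (act_cmp hC) ?(dom_id hc) ?(cod_id hc) //.
  by rewrite -{1}(cod_id hc pzero) (id_l hc) (act_idm hC) act_zero.
have kd : dom (pactm v u (idm (pzero : Ob C))) = pzero by rewrite (act_dom hC) (dom_id hc) act_zero.
have e4 : h = cmp (idm pzero) h by rewrite -[X in cmp (idm X) h]hcd (id_l hc).
rewrite e4 -{1}e3 -(cmp_assoc hc) ?hcd ?hd ?kd // -e2 -e1.
exact: e3.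
Qed.

End Supp.



Section Prod.
Variables (C D : pcat) (hC : is_pcat C) (hD : is_pcat D).
Let P := prod_pcat C D.

Lemma in_supp_prod (X : Ob P) n : in_supp X n <-> in_supp (X.1 : Ob C) n \/ in_supp (X.2 : Ob D) n.
Proof.
case: X => X1 X2 /=; split.
  case: (min_supp hC X1) => A [sA hA]; case: (min_supp hD X2) => B [sB hB].
  move=> h.
  have s : supported_on (C:=P) (X1, X2) (A ++ B).
    move=> u fx /=; rewrite sA ?sB // => a aA; apply: fx; by rewrite mem_cat aA ?orbT.
  have := h _ s; rewrite mem_cat => /orP [/hA|/hB]; by [left|right].
case=> h A sA; apply: h => u fx.
  by have := sA u fx => /= [[]].
by have := sA u fx => /= [[]].
Qed.

Lemma disj_prod (X Y : Ob P) : disj X Y -> disj (X.1 : Ob C) Y.1 /\ disj (X.2 : Ob D) Y.2.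
Proof.
move=> d; split=> n [h1 h2]; apply: (d n); rewrite !in_supp_prod; split; by [left|right].
Qed.

Lemma disj_prod1 (X Y : Ob C) : disj X Y -> disj (C:=P) (X, pzero) (Y, pzero).
Proof.
move=> d n []; rewrite !in_supp_prod /= => [[h1|h1]] [h2|h2].
- exact: (d n).
- exact: (zero_supp hD h2).
- exact: (zero_supp hD h1).
- exact: (zero_supp hD h1).
Qed.

Lemma disj_prod2 (X Y : Ob D) : disj X Y -> disj (C:=P) (pzero, X) (pzero, Y).
Proof.
move=> d n []; rewrite !in_supp_prod /= => [[h1|h1]] [h2|h2].
- exact: (zero_supp hC h1).
- exact: (zero_supp hC h1).
- exact: (zero_supp hC h2).
- exact: (d n).
Qed.

Lemma prod_is_pcat : is_pcat P.
Proof.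
have cC := pc_cat hC; have cD := pc_cat hD.
split.
- split.
  + by move=> [X1 X2] /=; rewrite (dom_id cC) (dom_id cD).
  + by move=> [X1 X2] /=; rewrite (cod_id cC) (cod_id cD).
  + by move=> [f1 f2] [g1 g2] /= [e1 e2]; rewrite (dom_cmp cC) ?(dom_cmp cD).
  + by move=> [f1 f2] [g1 g2] /= [e1 e2]; rewrite (cod_cmp cC) ?(cod_cmp cD).
  + by move=> [f1 f2] /=; rewrite (id_l cC) (id_l cD).
  + by move=> [f1 f2] /=; rewrite (id_r cC) (id_r cD).
  + by move=> [f1 f2] [g1 g2] [h1 h2] /= [e1 e2] [e3 e4]; rewrite (cmp_assoc cC) ?(cmp_assoc cD).
- by move=> u v [f1 f2] /=; rewrite !(act_dom hC) !(act_dom hD).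
- by move=> u v [f1 f2] /=; rewrite !(act_cod hC) !(act_cod hD).
- by move=> u [X1 X2] /=; rewrite (act_idm hC) (act_idm hD).
- by move=> u v w [f1 f2] [g1 g2] /= [e1 e2]; rewrite (act_cmp hC) ?(act_cmp hD).
- by move=> [X1 X2] /=; rewrite (act_unit_ob hC) (act_unit_ob hD).
- by move=> [f1 f2] /=; rewrite (act_unit_mor hC) (act_unit_mor hD).
- by move=> u v [X1 X2] /=; rewrite (act_assoc_ob hC) (act_assoc_ob hD).
- by move=> u u' v v' [f1 f2] /=; rewrite (act_assoc_mor hC) (act_assoc_mor hD).
- move=> [X1 X2]; case: (fin_supp hC X1) => A sA; case: (fin_supp hD X2) => B sB.
  exists (A ++ B) => u fx /=; rewrite sA ?sB // => a aA; apply: fx; by rewrite mem_cat aA ?orbT.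
- by move=> n; rewrite in_supp_prod /= => [[h|h]]; [apply: (zero_supp hC h)|apply: (zero_supp hD h)].
- move=> [f1 f2] [g1 g2] /disj_prod [d1 d2] /disj_prod [c1 c2] /=.
  by rewrite (sum_dom hC) ?(sum_dom hD).
- move=> [f1 f2] [g1 g2] /disj_prod [d1 d2] /disj_prod [c1 c2] /=.
  by rewrite (sum_cod hC) ?(sum_cod hD).
- by move=> [X1 X2] [Y1 Y2] /disj_prod [d1 d2] /=; rewrite (sum_idm hC) ?(sum_idm hD).
- move=> [f1 f2] [g1 g2] [f1' f2'] [g1' g2'] /= [e1 e2] [e3 e4].
  move=> /disj_prod [d1 d2] /disj_prod [c1 c2] /disj_prod [b1 b2] /=.
  by rewrite (sum_cmp hC) ?(sum_cmp hD).
- by move=> [X1 X2] /=; rewrite (sum_unit_ob hC) (sum_unit_ob hD).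
- by move=> [f1 f2] /=; rewrite (sum_unit_mor hC) (sum_unit_mor hD).
- move=> [X1 X2] [Y1 Y2] [Z1 Z2] /disj_prod [d1 d2] /disj_prod [c1 c2] /disj_prod [b1 b2] /=.
  by rewrite (sum_assoc_ob hC) ?(sum_assoc_ob hD).
- move=> [f1 f2] [g1 g2] [h1 h2].
  move=> /disj_prod [d1 d2] /disj_prod [c1 c2] /disj_prod [b1 b2].
  move=> /disj_prod [d1' d2'] /disj_prod [c1' c2'] /disj_prod [b1' b2'] /=.
  by rewrite (sum_assoc_mor hC) ?(sum_assoc_mor hD).
- by move=> [X1 X2] [Y1 Y2] /disj_prod [d1 d2] /=; rewrite (sum_comm_ob hC d1) (sum_comm_ob hD d2).
- move=> [f1 f2] [g1 g2] /disj_prod [d1 d2] /disj_prod [c1 c2] /=.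
  by rewrite (sum_comm_mor hC d1 c1) (sum_comm_mor hD d2 c2).
- by move=> u [X1 X2] [Y1 Y2] /disj_prod [d1 d2] /=; rewrite (sum_act_ob hC) ?(sum_act_ob hD).
- move=> u v [f1 f2] [g1 g2] /disj_prod [d1 d2] /disj_prod [c1 c2] /=.
  by rewrite (sum_act_mor hC) ?(sum_act_mor hD).
Qed.
End Prod.



Section PL.
Variables (C : pcat) (hC : is_pcat C).

Lemma sum0lm (f : Mor C) : psumm (idm pzero) f = f.
Proof.
have cC := pc_cat hC.
rewrite (sum_comm_mor hC) ?(sum_unit_mor hC) // ?(dom_id cC) ?(cod_id cC); exact: disj0l.
Qed.

Lemma interchange_ob (a b c d : Ob C) :
  disj a b -> disj a c -> disj a d -> disj b c -> disj b d -> disj c d ->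
  psum (psum a b) (psum c d) = psum (psum a c) (psum b d).
Proof.
move=> dab dac dad dbc dbd dcd.
have dcb := disj_sym dbc.
rewrite (sum_assoc_ob hC dab (disj_sumr hC dbc dbd dcd) (disj_sumr hC dac dad dcd)).
rewrite -(sum_assoc_ob hC dbc dcd dbd) (sum_comm_ob hC dbc) (sum_assoc_ob hC dcb dbd dcd).
by rewrite -(sum_assoc_ob hC dac (disj_sumr hC dcb dcd dbd) (disj_sumr hC dab dad dbd)).
Qed.

Lemma interchange_mor (a b c d : Mor C) :
  disj (dom a) (dom b) -> disj (dom a) (dom c) -> disj (dom a) (dom d) ->
  disj (dom b) (dom c) -> disj (dom b) (dom d) -> disj (dom c) (dom d) ->
  disj (cod a) (cod b) -> disj (cod a) (cod c) -> disj (cod a) (cod d) ->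
  disj (cod b) (cod c) -> disj (cod b) (cod d) -> disj (cod c) (cod d) ->
  psumm (psumm a b) (psumm c d) = psumm (psumm a c) (psumm b d).
Proof.
move=> dab dac dad dbc dbd dcd cab cac cad cbc cbd ccd.
have dcb := disj_sym dbc; have ccb := disj_sym cbc.
have Dcd := sum_dom hC dcd ccd; have Ccd := sum_cod hC dcd ccd.
have Dbd := sum_dom hC dbd cbd; have Cbd := sum_cod hC dbd cbd.
have Dbc := sum_dom hC dbc cbc; have Cbc := sum_cod hC dbc cbc.
have db_cd : disj (dom b) (dom (psumm c d)) by rewrite Dcd; apply: disj_sumr.
have da_cd : disj (dom a) (dom (psumm c d)) by rewrite Dcd; apply: disj_sumr.
have cb_cd : disj (cod b) (cod (psumm c d)) by rewrite Ccd; apply: disj_sumr.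
have ca_cd : disj (cod a) (cod (psumm c d)) by rewrite Ccd; apply: disj_sumr.
have dc_bd : disj (dom c) (dom (psumm b d)) by rewrite Dbd; apply: disj_sumr.
have da_bd : disj (dom a) (dom (psumm b d)) by rewrite Dbd; apply: disj_sumr.
have cc_bd : disj (cod c) (cod (psumm b d)) by rewrite Cbd; apply: disj_sumr.
have ca_bd : disj (cod a) (cod (psumm b d)) by rewrite Cbd; apply: disj_sumr.
rewrite (sum_assoc_mor hC dab db_cd da_cd cab cb_cd ca_cd).
rewrite -(sum_assoc_mor hC dbc dcd dbd cbc ccd cbd).
rewrite (sum_comm_mor hC dbc cbc).
rewrite (sum_assoc_mor hC dcb dbd dcd ccb cbd ccd).
by rewrite -(sum_assoc_mor hC dac dc_bd da_bd cac cc_bd ca_bd).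
Qed.

Lemma iso_inv (f : Mor C) : is_iso f -> exists g, [/\ dom g = cod f, cod g = dom f,
     cmp g f = idm (dom f), cmp f g = idm (cod f) & is_iso g].
Proof.
case=> g [h1 h2 h3 h4]; exists g; split => //; exists f; split.
- by rewrite h2.
- by rewrite h1.
- by rewrite h1.
- by rewrite h2.
Qed.

Lemma iso_cmp (f g : Mor C) : cod f = dom g -> is_iso f -> is_iso g -> is_iso (cmp g f).
Proof.
have cC := pc_cat hC.
move=> e [f' [f1 f2 f3 f4]] [g' [g1 g2 g3 g4]].
have cgf : cod (cmp g f) = cod g by rewrite (cod_cmp cC).
have dgf : dom (cmp g f) = dom f by rewrite (dom_cmp cC).
have cfg : cod (cmp f' g') = cod f' by rewrite (cod_cmp cC) // g2 f1 e.
have dfg : dom (cmp f' g') = dom g' by rewrite (dom_cmp cC) // g2 f1 e.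
exists (cmp f' g'); rewrite dfg cfg cgf dgf g1 f2; split => //.
- rewrite -(cmp_assoc cC (f:=cmp g f) (g:=g') (h:=f')); first last.
  + by rewrite g2 f1 e.
  + by rewrite cgf g1.
  rewrite (cmp_assoc cC (f:=f) (g:=g) (h:=g')) // ?g1 // g3 -e (id_l cC) f3 //.
- rewrite -(cmp_assoc cC (f:=cmp f' g') (g:=f) (h:=g)) //; last by rewrite cfg f2.
  rewrite (cmp_assoc cC (f:=g') (g:=f') (h:=f)) ?f1 ?g2 ?e // f4 e -g2 (id_l cC) g4 //.
Qed.

Lemma iso_act (f : Mor C) u v : is_iso f -> is_iso (pactm u v f).
Proof.
have cC := pc_cat hC.
case=> g [g1 g2 g3 g4]; exists (pactm v u g).
rewrite !(act_dom hC) !(act_cod hC) g1 g2; split => //.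
- by rewrite (act_cmp hC) ?g1 // g3 (act_idm hC).
- by rewrite (act_cmp hC) ?g2 // g4 (act_idm hC).
Qed.

Lemma iso_id (X : Ob C) : is_iso (idm X).
Proof.
have cC := pc_cat hC.
exists (idm X); rewrite (dom_id cC) (cod_id cC); split => //.
  by rewrite -{1}(cod_id cC X) (id_l cC).
by rewrite -{1}(cod_id cC X) (id_l cC).
Qed.

End PL.

Lemma functor_iso (C D : Defs.cat) (F : functor C D) (f : Mor C) : is_functor F ->
  is_iso f -> is_iso (fmor F f).
Proof.
move=> hF [g [g1 g2 g3 g4]]; exists (fmor F g).
rewrite !(f_dom hF) !(f_cod hF) g1 g2; split => //.
  by rewrite -(f_cmp hF) ?g1 // g3 (f_id hF).
by rewrite -(f_cmp hF) ?g2 // g4 (f_id hF).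
Qed.

Lemma disj_slices (C : pcat) (hC : is_pcat C) (m : injw2) (X Y : Ob C) :
  disj (pact (slice m i0) X) (pact (slice m i1) Y).
Proof.
move=> n [/(in_supp_act hC) [k [_ ->]] /(in_supp_act hC) [j [_ e]]].
by move/mfun_inj: e => /= [].
Qed.

Section FmuS.
Variables (C D : pcat) (hC : is_pcat C) (hD : is_pcat D) (F : functor C D)
  (hF : is_functor F) (hFs : preserves_sums F) (m : injw2).
Let s0 := slice m i0.
Let s1 := slice m i1.

Lemma Fmu_functor : is_functor (Fmu F m).
Proof.
have cC := pc_cat hC; have cD := pc_cat hD.
split.
- move=> [f1 f2] /=; rewrite (sum_dom hD) ?(act_dom hD) ?(act_cod hD) ?(f_dom hF) //;
    exact: disj_slices.
- move=> [f1 f2] /=; rewrite (sum_cod hD) ?(act_dom hD) ?(act_cod hD) ?(f_cod hF) //;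
    exact: disj_slices.
- move=> [X1 X2] /=; rewrite (f_id hF) !(act_idm hD) (sum_idm hD) //; exact: disj_slices.
- move=> [f1 f2] [g1 g2] /= [e1 e2].
  rewrite (f_cmp hF) // -(act_cmp hD (slice m i0) (slice m i0) (slice m i0)) ?(f_dom hF) ?(f_cod hF) ?e1 //.
  rewrite -(act_cmp hD (slice m i1) (slice m i1) (slice m i1)) //.
  rewrite (sum_cmp hD) // ?(act_dom hD) ?(act_cod hD) ?(f_dom hF) ?(f_cod hF) ?e1 ?e2 //;
    exact: disj_slices.
Qed.

Lemma Fmu_sums : preserves_sums (Fmu F m).
Proof.
case: hFs => F0 Fd Fs Fsm.
have cC := pc_cat hC; have cD := pc_cat hD.
have sl (X Y : Ob D) := @disj_slices D hD m X Y.
split.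
- by rewrite /= F0 !(act_zero hD) (sum_unit_ob hD).
- move=> [X1 X2] [Y1 Y2] /(disj_prod hC hD) /= [d1 d2].
  move=> n [/(in_supp_sum hD (sl _ _)) h1 /(in_supp_sum hD (sl _ _)) h2].
  case: h1 => h1; case: h2 => h2.
  + exact: (disj_act hD (u:=s0) (Fd _ _ d1) (conj h1 h2)).
  + exact: (sl _ _ n (conj h1 h2)).
  + exact: (sl _ _ n (conj h2 h1)).
  + exact: (disj_act hD (u:=s1) d2 (conj h1 h2)).
- move=> [X1 X2] [Y1 Y2] /(disj_prod hC hD) /= [d1 d2].
  rewrite Fs // !(sum_act_ob hD) //; last exact: Fd.
  apply: interchange_ob => //; try exact: sl; try (apply: disj_sym; exact: sl).
  + exact/(disj_act hD)/Fd.
  + exact/(disj_act hD).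
- move=> [f1 f2] [g1 g2] /(disj_prod hC hD) /= [d1 d2] /(disj_prod hC hD) /= [c1 c2].
  rewrite Fsm // !(sum_act_mor hD) // ?(f_dom hF) ?(f_cod hF); try exact: Fd.
  apply: interchange_mor => //; rewrite ?(act_dom hD) ?(act_cod hD) ?(f_dom hF) ?(f_cod hF);
    try exact: sl; try (apply: disj_sym; exact: sl).
  + exact/(disj_act hD)/Fd.
  + exact/(disj_act hD).
  + exact/(disj_act hD)/Fd.
  + exact/(disj_act hD).
Qed.
End FmuS.



Section CatL.
Variables (C : Defs.cat) (cC : is_cat C).

Lemma cancel_mid (a b c d e f : Mor C) :
  cod f = dom e -> cod e = dom d -> cod d = dom c -> cod c = dom b -> cod b = dom a ->
  cmp c d = idm (dom d) ->
  cmp (cmp a (cmp b c)) (cmp d (cmp e f)) = cmp a (cmp (cmp b e) f).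
Proof.
move=> fe ed dc cb ba cd.
have cef : cod (cmp e f) = cod e by rewrite (cod_cmp cC).
have cdef : cod (cmp d (cmp e f)) = cod d by rewrite (cod_cmp cC) // cef.
have dbc : dom (cmp b c) = dom c by rewrite (dom_cmp cC).
have cbc : cod (cmp b c) = cod b by rewrite (cod_cmp cC).
rewrite -(cmp_assoc cC (f:=cmp d (cmp e f)) (g:=cmp b c) (h:=a)); last by rewrite cbc.
  2: by rewrite cdef dbc.
rewrite -(cmp_assoc cC (f:=cmp d (cmp e f)) (g:=c) (h:=b)) ?cdef //.
rewrite (cmp_assoc cC (f:=cmp e f) (g:=d) (h:=c)) ?cef // cd -ed -cef (id_l cC).
have ccd : cod c = dom d.
  by rewrite -(cod_cmp cC (f:=d) (g:=c)) // cd (cod_id cC).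
by rewrite (cmp_assoc cC (f:=f) (g:=e) (h:=b)) // ed -ccd.
Qed.

Lemma reassoc4 (a b t c d : Mor C) :
  cod d = dom c -> cod c = dom t -> cod t = dom b -> cod b = dom a ->
  cmp a (cmp (cmp b (cmp t c)) d) = cmp (cmp a b) (cmp t (cmp c d)).
Proof.
move=> dc ct tb ba.
have ctc : cod (cmp t c) = cod t by rewrite (cod_cmp cC).
have dtc : dom (cmp t c) = dom c by rewrite (dom_cmp cC).
rewrite -(cmp_assoc cC (f:=d) (g:=cmp t c) (h:=b)) ?dtc ?ctc //.
rewrite (cmp_assoc cC (f:=cmp (cmp t c) d) (g:=b) (h:=a)) //; last first.
  by rewrite (cod_cmp cC) ?dtc // ctc.
by rewrite (cmp_assoc cC (f:=d) (g:=c) (h:=t)).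
Qed.

Lemma idl (f : Mor C) X : cod f = X -> cmp (idm X) f = f.
Proof. by move=> <-; rewrite (id_l cC). Qed.
Lemma idr (f : Mor C) X : dom f = X -> cmp f (idm X) = f.
Proof. by move=> <-; rewrite (id_r cC). Qed.
End CatL.

Section CircL.
Variables (C : pcat) (hC : is_pcat C).

Lemma compw_idl (v : injw) : compw idw v = v.
Proof. exact: injw_eq. Qed.
Lemma compw_idr (v : injw) : compw v idw = v.
Proof. exact: injw_eq. Qed.

Lemma circ_inv u (X : Ob C) : cmp (circinv u X) (circ u X) = idm X.
Proof.
have cC := pc_cat hC.
rewrite /circ /circinv (act_cmp hC) ?(dom_id cC) ?(cod_id cC) //.
by rewrite (idl cC) ?(cod_id cC) // (act_unit_mor hC).
Qed.

Lemma inv_circ u (X : Ob C) : cmp (circ u X) (circinv u X) = idm (pact u X).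
Proof.
have cC := pc_cat hC.
rewrite /circ /circinv (act_cmp hC) ?(dom_id cC) ?(cod_id cC) //.
by rewrite (idl cC) ?(cod_id cC) // (act_idm hC).
Qed.

Lemma circ_circ u v (Y : Ob C) : cmp (circ u (pact v Y)) (circ v Y) = circ (compw u v) Y.
Proof.
have cC := pc_cat hC.
rewrite /circ -(act_idm hC) (act_assoc_mor hC) compw_idl (act_cmp hC) ?(dom_id cC) ?(cod_id cC) //.
by rewrite (idl cC) ?(cod_id cC).
Qed.

Lemma circinv_circinv u v (X : Ob C) : cmp (circinv v X) (circinv u (pact v X)) = circinv (compw u v) X.
Proof.
have cC := pc_cat hC.
rewrite /circinv -(act_idm hC) (act_assoc_mor hC) compw_idl (act_cmp hC) ?(dom_id cC) ?(cod_id cC) //.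
by rewrite (idl cC) ?(cod_id cC).
Qed.

Lemma circ_sum v (X Y : Ob C) : disj X Y -> circ v (psum X Y) = psumm (circ v X) (circ v Y).
Proof.
have cC := pc_cat hC.
move=> d; rewrite /circ -(sum_idm hC d) (sum_act_mor hC) // ?(dom_id cC) ?(cod_id cC) //.
Qed.

Lemma circinv_sum v (X Y : Ob C) : disj X Y -> circinv v (psum X Y) = psumm (circinv v X) (circinv v Y).
Proof.
have cC := pc_cat hC.
move=> d; rewrite /circinv -(sum_idm hC d) (sum_act_mor hC) // ?(dom_id cC) ?(cod_id cC) //.
Qed.

Lemma circ_dom u (X : Ob C) : dom (circ u X) = X.
Proof. by rewrite /circ (act_dom hC) (dom_id (pc_cat hC)) (act_unit_ob hC). Qed.
Lemma circ_cod u (X : Ob C) : cod (circ u X) = pact u X.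
Proof. by rewrite /circ (act_cod hC) (cod_id (pc_cat hC)). Qed.
Lemma circinv_dom u (X : Ob C) : dom (circinv u X) = pact u X.
Proof. by rewrite /circinv (act_dom hC) (dom_id (pc_cat hC)). Qed.
Lemma circinv_cod u (X : Ob C) : cod (circinv u X) = X.
Proof. by rewrite /circinv (act_cod hC) (cod_id (pc_cat hC)) (act_unit_ob hC). Qed.

Lemma circ_id (X : Ob C) : circ idw X = idm X.
Proof. by rewrite /circ (act_unit_mor hC). Qed.
Lemma circinv_id (X : Ob C) : circinv idw X = idm X.
Proof. by rewrite /circinv (act_unit_mor hC). Qed.

Lemma act_via_circ u v (f : Mor C) : pactm u v f = cmp (circ v (cod f)) (cmp f (circinv u (dom f))).
Proof.
have cC := pc_cat hC.
rewrite /circ /circinv.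
have e1 : cmp f (pactm u idw (idm (dom f))) = pactm u idw f.
  have := act_cmp hC u idw idw (f:=idm (dom f)) (g:=f).
  rewrite (act_unit_mor hC) (cod_id cC) (idr cC) // => h; exact: h.
by rewrite e1 (act_cmp hC) ?(dom_id cC) // (idl cC).
Qed.
End CircL.



Definition pmk (C D : pcat) (G : functor C D) (hD : is_cat D) (X Y : Ob C) (h : Mor D) :
  Mor (push G hD) := mkv (P:=valid_push G) (X, Y, h) (@idm (push_cat G hD) X).

Section Push.
Variables (C D : pcat) (hC : is_pcat C) (hD : is_pcat D) (G : functor C D)
  (hG : is_functor G) (hGs : preserves_sums G).
Let cC := pc_cat hC.
Let cD := pc_cat hD.
Local Notation P := (push G (pc_cat hD)).

Ltac dc := repeat first
  [ done
  | progress rewrite ?(f_dom hG) ?(f_cod hG) ?(circ_dom hC) ?(circ_cod hC)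
       ?(circinv_dom hC) ?(circinv_cod hC) ?(dom_id cD) ?(cod_id cD)
  | match goal with H : dom ?h = _ |- context [dom ?h] => rewrite H end
  | match goal with H : cod ?h = _ |- context [cod ?h] => rewrite H end
  | rewrite (dom_cmp cD); last by dc
  | rewrite (cod_cmp cD); last by dc ].

Lemma pmk_val X Y h : dom h = G X -> cod h = G Y -> sval (pmk G (pc_cat hD) X Y h) = (X, Y, h).
Proof. by move=> h1 h2; apply: mkv_val. Qed.

Lemma Pdom (t : Mor P) : dom t = (sval t).1.1. Proof. by []. Qed.
Lemma Pcod (t : Mor P) : cod t = (sval t).1.2. Proof. by []. Qed.

Lemma P_cmp (f g : Mor P) : cod f = dom g ->
  sval (cmp g f) = ((sval f).1.1, (sval g).1.2, cmp (sval g).2 (sval f).2).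
Proof.
move: f g => [[[X Y] f] /= [fd fc]] [[[Y' Z] g] /= [gd gc]] /= e; subst Y'.
by apply: mkv_val; split => /=; dc.
Qed.

Lemma P_act u v (t : Mor P) : sval (pactm u v t) =
  (pact u (sval t).1.1, pact v (sval t).1.2,
   cmp (fmor G (circ v (sval t).1.2)) (cmp (sval t).2 (fmor G (circinv u (sval t).1.1)))).
Proof.
move: t => [[[X Y] f] /= [fd fc]] /=.
by apply: mkv_val; split => /=; dc.
Qed.

Lemma P_sum (f g : Mor P) : disj (dom f) (dom g) -> disj (cod f) (cod g) ->
  sval (psumm f g) = (psum (sval f).1.1 (sval g).1.1, psum (sval f).1.2 (sval g).1.2,
                      psumm (sval f).2 (sval g).2).
Proof.
case: hGs => G0 Gd Gs Gsm.
move: f g => [[[X Y] f] /= [fd fc]] [[[X' Y'] g] /= [gd gc]] /= d1 d2.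
have dG : disj (G X) (G X') by apply: Gd.
have cG : disj (G Y) (G Y') by apply: Gd.
apply: mkv_val; split => /=.
  by rewrite (sum_dom hD) ?fd ?gd ?fc ?gc // Gs.
by rewrite (sum_cod hD) ?fd ?gd ?fc ?gc // Gs.
Qed.

Lemma P_id (X : Ob P) : sval (idm X) = (X, X, idm (G X)).
Proof. by []. Qed.


Lemma Pdom_cmp (f g : Mor P) : cod f = dom g -> dom (cmp g f) = dom f.
Proof. by move=> e; rewrite Pdom P_cmp. Qed.
Lemma Pcod_cmp (f g : Mor P) : cod f = dom g -> cod (cmp g f) = cod g.
Proof. by move=> e; rewrite Pcod P_cmp. Qed.

Lemma push_is_pcat : is_pcat P.
Proof.
case: hGs => G0 Gd Gs Gsm.
split.
- split.
  + by [].
  + by [].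
  + exact: Pdom_cmp.
  + exact: Pcod_cmp.
  + move=> [[[X Y] f] [fd fc]]; simpl in fd, fc; apply: sig_eq; rewrite P_cmp //= (idl cD) //.
  + move=> [[[X Y] f] [fd fc]]; simpl in fd, fc; apply: sig_eq; rewrite P_cmp //= (idr cD) //.
  + move=> f g h e1 e2; apply: sig_eq.
    rewrite !P_cmp ?Pcod_cmp ?Pdom_cmp //.
    move: f g h e1 e2 => [[[X Y] f] /= [fd fc]] [[[Y1 Z] g] /= [gd gc]] [[[Z1 W] h] /= [hd hc]] /= e1 e2.
    subst Y1 Z1; rewrite (cmp_assoc cD) //; dc.
- by move=> u v t; rewrite Pdom P_act.
- by move=> u v t; rewrite Pcod P_act.
- move=> u X; apply: sig_eq; rewrite P_act P_id /= (idl cD); last by dc.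
  by rewrite -(f_cmp hG) ?(circinv_cod hC) ?(circ_dom hC) // (inv_circ hC) (f_id hG).
- move=> u v w f g e; apply: sig_eq.
  rewrite P_cmp; last by rewrite Pcod Pdom !P_act /=; congr (pact _ _); exact: e.
  rewrite !P_act P_cmp //.
  move: f g e => [[[X Y] f] /= [fd fc]] [[[Y1 Z] g] /= [gd gc]] /= e; subst Y1.
  congr (_, _); apply: (cancel_mid cD); try by dc.
  by rewrite -(f_cmp hG) ?(circ_cod hC) ?(circinv_dom hC) // (circ_inv hC) (f_id hG) (f_dom hG) (circ_dom hC).
- exact: (act_unit_ob hC).
- move=> [[[X Y] f] [fd fc]]; simpl in fd, fc; apply: sig_eq; rewrite P_act /=.
  rewrite (circ_id hC) (circinv_id hC) !(f_id hG) !(act_unit_ob hC) (idr cD) ?(idl cD) //; dc.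
- exact: (act_assoc_ob hC).
- move=> u u' v v' [[[X Y] f] [fd fc]]; simpl in fd, fc; apply: sig_eq; rewrite !P_act /= !(act_assoc_ob hC).
  rewrite (reassoc4 cD); try by dc.
  rewrite -!(f_cmp hG) ?(circ_cod hC) ?(circ_dom hC) ?(circinv_cod hC) ?(circinv_dom hC) //.
  by rewrite (circ_circ hC) (circinv_circinv hC).
- exact: (fin_supp hC).
- exact: (zero_supp hC).
- by move=> f g d1 d2; rewrite Pdom P_sum.
- by move=> f g d1 d2; rewrite Pcod P_sum.
- move=> X Y d; apply: sig_eq; rewrite P_sum //= Gs // (sum_idm hD) //; exact: Gd.
- move=> f g f' g' e1 e2 d1 d2 d3; apply: sig_eq.
  have d2' : disj (dom f') (dom g') by rewrite -e1 -e2.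
  have ec : cod (psumm f g) = dom (psumm f' g').
    by rewrite Pcod Pdom !P_sum // -!Pcod -!Pdom e1 e2.
  rewrite (P_cmp ec) !P_sum ?Pdom_cmp ?Pcod_cmp // !P_cmp //=.
  clear d2' ec.
  move: f g f' g' e1 e2 d1 d2 d3 => [[[X Y] f] /= [fd fc]] [[[X' Y'] g] /= [gd gc]].
  move=> [[[Y1 Z] f'] /= [fd' fc']] [[[Y1' Z'] g'] /= [gd' gc']] /= e1 e2 d1 d2 d3.
  subst Y1 Y1'.
  by rewrite (sum_cmp hD) //; dc; apply: Gd.
- exact: (sum_unit_ob hC).
- move=> [[[X Y] f] [fd fc]]; simpl in fd, fc; apply: sig_eq.
  rewrite P_sum /=; try exact: (disj0r hC).
  by rewrite !(sum_unit_ob hC) G0 (sum_unit_mor hD).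
- exact: (sum_assoc_ob hC).
- move=> f g h d1 d2 d3 c1 c2 c3; apply: sig_eq.
  rewrite !P_sum //; rewrite ?Pdom ?Pcod ?P_sum //=; try (apply: (disj_suml hC) => //);
    try (apply: (disj_sumr hC) => //).
  move: f g h d1 d2 d3 c1 c2 c3 => [[[X Y] f] /= [fd fc]] [[[X' Y'] g] /= [gd gc]].
  move=> [[[X'' Y''] h] /= [hd hc]] /= d1 d2 d3 c1 c2 c3.
  by rewrite !(sum_assoc_ob hC) // (sum_assoc_mor hD) //; dc; apply: Gd.
- exact: (sum_comm_ob hC).
- move=> f g d1 d2; apply: sig_eq; rewrite !P_sum //; try (by move=> n [? ?]; apply: (d1 n)); try (by move=> n [? ?]; apply: (d2 n)).
  move: f g d1 d2 => [[[X Y] f] /= [fd fc]] [[[X' Y'] g] /= [gd gc]] /= d1 d2.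
  by rewrite (sum_comm_ob hC d1) (sum_comm_ob hC d2) (sum_comm_mor hD) //; dc; apply: Gd.
- move=> u X Y d; exact: (sum_act_ob hC u d).
- move=> u v f g d1 d2; apply: sig_eq.
  rewrite P_act P_sum // P_sum; last 2 first.
  + by rewrite !Pdom !P_act; apply: (disj_act hC).
  + by rewrite !Pcod !P_act; apply: (disj_act hC).
  rewrite !P_act.
  move: f g d1 d2 => [[[X Y] f] /= [fd fc]] [[[X' Y'] g] /= [gd gc]] /= d1 d2.
  rewrite !(sum_act_ob hC) //; congr (_, _).
  have du := disj_act hC (u:=u) d1; have dv := disj_act hC (u:=v) d2.
  rewrite (circ_sum hC) // (circinv_sum hC) // !Gsm; try by rewrite ?(circ_dom hC) ?(circ_cod hC)
     ?(circinv_dom hC) ?(circinv_cod hC).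
  rewrite (sum_cmp hD (f:=cmp f (fmor G (circinv u X)))); try by dc; apply: Gd.
  by rewrite (sum_cmp hD (f:=fmor G (circinv u X))) //; dc; apply: Gd.
Qed.

Lemma I_val (f : Mor C) : sval (fmor (push_I G (pc_cat hD)) f) = (dom f, cod f, fmor G f).
Proof. by apply: mkv_val; split; rewrite /= ?(f_dom hG) ?(f_cod hG). Qed.

Lemma pushI_pmorph : is_pmorph (push_I G (pc_cat hD)).
Proof.
case: hGs => G0 Gd Gs Gsm.
split; first split.
- by move=> f; rewrite Pdom I_val.
- by move=> f; rewrite Pcod I_val.
- move=> X; apply: sig_eq; rewrite I_val P_id (dom_id cC) (cod_id cC) (f_id hG) //.
- move=> f g e; apply: sig_eq.
  rewrite P_cmp; last by rewrite Pcod Pdom !I_val.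
  by rewrite !I_val (f_cmp hG) // (dom_cmp cC) // (cod_cmp cC).
split => //.
- move=> u v f; apply: sig_eq; rewrite I_val P_act I_val /= (act_dom hC) (act_cod hC).
  rewrite {1}(act_via_circ hC u v f) !(f_cmp hG) //.
    by rewrite (circinv_cod hC).
  by rewrite (cod_cmp cC) ?(circinv_cod hC) // (circ_dom hC).
- move=> f g d1 d2; apply: sig_eq.
  rewrite I_val P_sum; try by rewrite ?Pdom ?Pcod !I_val.
  by rewrite !I_val /= (sum_dom hC) // (sum_cod hC) // Gsm.
Qed.

Lemma P_iso (t : Mor P) : is_iso (sval t).2 -> is_iso t.
Proof.
move: t => [[[X Y] h] [hd hc]] /= [g [g1 g2 g3 g4]]; simpl in hd, hc.
have gv : sval (pmk G (pc_cat hD) Y X g) = (Y, X, g).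
  by apply: pmk_val; rewrite ?g1 ?g2.
exists (pmk G (pc_cat hD) Y X g); split.
- by rewrite Pdom gv.
- by rewrite Pcod gv.
- apply: sig_eq; rewrite P_cmp; last by rewrite Pdom gv.
  by rewrite gv /= g3 hd.
- apply: sig_eq; rewrite P_cmp; last by rewrite Pcod gv.
  by rewrite gv /= g4 hc.
Qed.

End Push.



Lemma pmorph_comp (A B P : pcat) (K : functor A B) (H : functor B P) :
  is_pmorph K -> is_pmorph H -> (forall X Y : Ob A, disj X Y -> disj (K X) (K Y)) ->
  is_pmorph (fcomp K H).
Proof.
move=> [hK [K1 K2 K3 K4 K5]] [hH [H1 H2 H3 H4 H5]] Kd.
split; first split.
- by move=> f /=; rewrite (f_dom hH) (f_dom hK).
- by move=> f /=; rewrite (f_cod hH) (f_cod hK).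
- by move=> X /=; rewrite (f_id hK) (f_id hH).
- by move=> f g e /=; rewrite (f_cmp hK) // (f_cmp hH) // (f_cod hK) (f_dom hK) e.
split => /=.
- by move=> u X; rewrite K1 H1.
- by move=> u v f; rewrite K2 H2.
- by rewrite K3 H3.
- by move=> X Y d; rewrite K4 // H4 //; apply: Kd.
- move=> f g d1 d2; rewrite K5 // H5 // ?(f_dom hK) ?(f_cod hK); by apply: Kd.
Qed.

Section Incl.
Variables (C D : pcat) (hC : is_pcat C) (hD : is_pcat D).

Lemma incl1_pmorph : is_pmorph (incl1 C D).
Proof.
have cD := pc_cat hD.
split; first split.
- by move=> f /=; rewrite (dom_id cD).
- by move=> f /=; rewrite (cod_id cD).
- by [].
- by move=> f g e /=; rewrite (idl cD) // (cod_id cD).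
split => /=.
- by move=> u X; rewrite (act_zero hD).
- by move=> u v f; rewrite (actm_zero hD).
- by [].
- by move=> X Y d; rewrite (sum_unit_ob hD).
- by move=> f g d1 d2; rewrite (sum_unit_mor hD).
Qed.

Lemma incl2_pmorph : is_pmorph (incl2 C D).
Proof.
have cC := pc_cat hC.
split; first split.
- by move=> f /=; rewrite (dom_id cC).
- by move=> f /=; rewrite (cod_id cC).
- by [].
- by move=> f g e /=; rewrite (idl cC) // (cod_id cC).
split => /=.
- by move=> u X; rewrite (act_zero hC).
- by move=> u v f; rewrite (actm_zero hC).
- by [].
- by move=> X Y d; rewrite (sum_unit_ob hC).
- by move=> f g d1 d2; rewrite (sum_unit_mor hC).
Qed.
End Incl.

Section NatL.
Variables (C : pcat) (hC : is_pcat C).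

Lemma circinv_nat u (g : Mor C) :
  cmp (circinv u (cod g)) (pactm u u g) = cmp g (circinv u (dom g)).
Proof.
have cC := pc_cat hC.
rewrite /circinv (act_cmp hC) ?(dom_id cC) // (idl cC) //.
rewrite -[X in cmp X _](act_unit_mor hC g) (act_cmp hC) ?(cod_id cC) // (idr cC) //.
Qed.
End NatL.



Section Cyl.
Variables (C D : pcat) (hC : is_pcat C) (hD : is_pcat D) (F : functor C D)
  (hF : is_functor F) (hFs : preserves_sums F) (m : injw2).
Let hCD := prod_is_pcat hC hD.
Let hG := Fmu_functor hC hD hF m.
Let hGs := Fmu_sums hC hD hF hFs m.
Let cC := pc_cat hC.
Let cD := pc_cat hD.
Local Notation G := (Fmu F m).
Local Notation P := (Cyl F m (pc_cat hD)).
Local Notation s0 := (slice m i0).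
Local Notation s1 := (slice m i1).
Local Notation I1 := (I1 F m (pc_cat hD)).
Local Notation I2 := (I2 F m (pc_cat hD)).

Lemma Fmu0Y Y : G (pzero, Y) = pact s1 Y.
Proof. case: hFs => F0 _ _ _; by rewrite /= F0 (act_zero hD) (sum0l hD). Qed.
Lemma FmuX0 X : G (X, pzero) = pact s0 (F X).
Proof. by rewrite /= (act_zero hD) (sum_unit_ob hD). Qed.
Lemma Fmu_idg g : fmor G (idm pzero, g) = pactm s1 s1 g.
Proof.
case: hFs => F0 _ _ _.
by rewrite /= (f_id hF) F0 (act_idm hD) (act_zero hD) (sum0lm hD).
Qed.
Lemma Fmu_fid f : fmor G (f, idm pzero) = pactm s0 s0 (fmor F f).
Proof. by rewrite /= (actm_zero hD) (sum_unit_mor hD). Qed.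

Lemma I2_val g : sval (fmor I2 g) = ((pzero, dom g), (pzero, cod g), pactm s1 s1 g).
Proof.
have e := I_val hD hG (idm pzero, g).
have e2 : (dom (c:=prod_pcat C D) (idm pzero, g), cod (c:=prod_pcat C D) (idm pzero, g),
   fmor G (idm pzero, g)) = ((pzero, dom g), (pzero, cod g), pactm s1 s1 g).
  by rewrite Fmu_idg /= (dom_id cC) (cod_id cC).
exact: (etrans e e2).
Qed.

Lemma I1_val f : sval (fmor I1 f) = ((dom f, pzero), (cod f, pzero), pactm s0 s0 (fmor F f)).
Proof.
have e := I_val hD hG (f, idm pzero).
have e2 : (dom (c:=prod_pcat C D) (f, idm pzero), cod (c:=prod_pcat C D) (f, idm pzero),
   fmor G (f, idm pzero)) = ((dom f, pzero), (cod f, pzero), pactm s0 s0 (fmor F f)).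
  by rewrite Fmu_fid /= (dom_id cD) (cod_id cD).
exact: (etrans e e2).
Qed.

Lemma I1_pmorph : is_pmorph I1.
Proof.
exact: (pmorph_comp (incl1_pmorph C hD) (pushI_pmorph hCD hD hG hGs) (disj_prod1 hC hD)).
Qed.
Lemma I2_pmorph : is_pmorph I2.
Proof.
exact: (pmorph_comp (incl2_pmorph D hC) (pushI_pmorph hCD hD hG hGs) (disj_prod2 hC hD)).
Qed.

Definition Qf : functor P D := @Functor P D (fun X => G X) (fun t => (sval t).2).

Lemma Q_functor : is_functor Qf.
Proof.
split.
- by move=> t; case: (proj2_sig t).
- by move=> t; case: (proj2_sig t).
- by [].
- by move=> f g e; rewrite /= (P_cmp e).
Qed.

Lemma I2_equiv : is_equiv I2.
Proof.
split; first exact: I2_pmorph.1.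
exists Qf; split; first exact: Q_functor.
split.
- exists (fun Y => circinv s1 Y); split.
  + move=> Y; split.
    * by rewrite (circinv_dom hD) -Fmu0Y.
    * by rewrite (circinv_cod hD).
    * by rewrite /circinv; apply: iso_act => //; apply: iso_id.
  + move=> g.
    change (fmor (fcomp I2 Qf) g) with (sval (fmor I2 g)).2.
    rewrite I2_val /=; exact: circinv_nat.
- pose b X := pmk G (pc_cat hD) (pzero, G X) X (circinv s1 (G X)).
  have bv X : sval (b X) = ((pzero, G X), X, circinv s1 (G X)).
    by apply: pmk_val; rewrite ?(circinv_dom hD) ?(circinv_cod hD) ?Fmu0Y.
  exists b; split.
  + move=> X; split.
    * by rewrite Pdom bv.
    * by rewrite Pcod bv.
    * by apply: P_iso; rewrite bv /=; apply: iso_act => //; apply: iso_id.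
  + move=> [[[X Y] h] [hd hc]]; simpl in hd, hc.
    set t := exist _ _ _.
    change (fmor (fcomp Qf I2) t) with (fmor I2 h).
    have iv := I2_val h; rewrite hd hc in iv.
    apply: sig_eq.
    rewrite (P_cmp (f:=fmor I2 h)); last by rewrite Pcod Pdom iv bv.
    rewrite (P_cmp (f:=b X)); last by rewrite Pcod bv.
    rewrite iv !bv /=; congr (_, _).
    by rewrite -hc -hd; apply: circinv_nat.
Qed.

Lemma I1_equiv : is_equiv F -> is_equiv I1.
Proof.
move=> [_ [K [hK [[a [aiso anat]] [b [biso bnat]]]]]].
split; first exact: I1_pmorph.1.
pose J := @Functor P C (fun X => K (G X)) (fun t => fmor K (sval t).2).
have hJ : is_functor J.
  split.
  - by move=> t; rewrite /= (f_dom hK) (proj1 (proj2_sig t)).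
  - by move=> t; rewrite /= (f_cod hK) (proj2 (proj2_sig t)).
  - by move=> X; rewrite /= (f_id hK).
  - move=> f g e; rewrite /= (P_cmp e) /= (f_cmp hK) //.
    rewrite (proj2 (proj2_sig f)) (proj1 (proj2_sig g)); congr (G _); exact: e.
exists J; split; first exact: hJ.
split.
- exists (fun X => cmp (a X) (fmor K (circinv s0 (F X)))); split.
  + move=> X; case: (aiso X) => a1 a2 a3.
    have ck : cod (fmor K (circinv s0 (F X))) = dom (a X).
      by rewrite (f_cod hK) (circinv_cod hD) a1.
    split.
    * by rewrite (dom_cmp cC) // (f_dom hK) (circinv_dom hD) -FmuX0.
    * by rewrite (cod_cmp cC) // a2.
    * apply: (iso_cmp hC) => //; apply: (functor_iso hK); apply: iso_act => //; exact: iso_id.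
  + move=> f.
    change (fmor (fcomp I1 J) f) with (fmor K (sval (fmor I1 f)).2).
    rewrite I1_val /=.
    case: (aiso (cod f)) => a1 a2 a3; case: (aiso (dom f)) => a1' a2' a3'.
    have an := anat f; simpl in an.
    have nat1 : cmp (circinv s0 (F (cod f))) (pactm s0 s0 (fmor F f)) =
                cmp (fmor F f) (circinv s0 (F (dom f))).
      by rewrite -(f_cod hF) -(f_dom hF); apply: circinv_nat.
    rewrite -(cmp_assoc cC); first last.
    * by rewrite (f_cod hK) (circinv_cod hD) a1.
    * by rewrite (f_cod hK) (f_dom hK) (act_cod hD) (circinv_dom hD) (f_cod hF).
    rewrite -(f_cmp hK); last by rewrite (act_cod hD) (circinv_dom hD) (f_cod hF).
    rewrite nat1 (f_cmp hK); last by rewrite (circinv_cod hD) (f_dom hF).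
    rewrite (cmp_assoc cC); first last.
    * by rewrite (f_cod hK) (f_cod hF) a1.
    * by rewrite (f_cod hK) (f_dom hK) (circinv_cod hD) (f_dom hF).
    rewrite an -(cmp_assoc cC) //.
    by rewrite (f_cod hK) (circinv_cod hD) a1'.
- pose c X := pmk G (pc_cat hD) (K (G X), pzero) X (pactm s0 idw (b (G X))).
  have cv X : sval (c X) = ((K (G X), pzero), X, pactm s0 idw (b (G X))).
    case: (biso (G X)) => b1 b2 b3.
    apply: pmk_val.
      by rewrite (act_dom hD) b1 FmuX0.
    by rewrite (act_cod hD) b2 (act_unit_ob hD).
  exists c; split.
  + move=> X; split.
    * by rewrite Pdom cv.
    * by rewrite Pcod cv.
    * apply: P_iso; rewrite cv /=; apply: iso_act => //; by case: (biso (G X)).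
  + move=> [[[X Y] h] [hd hc]]; simpl in hd, hc.
    set t := exist _ _ _.
    change (fmor (fcomp J I1) t) with (fmor I1 (fmor K h)).
    have iv := I1_val (fmor K h); rewrite (f_dom hK) (f_cod hK) hd hc in iv.
    apply: sig_eq.
    rewrite (P_cmp (f:=fmor I1 (fmor K h))); last by rewrite Pcod Pdom iv cv.
    rewrite (P_cmp (f:=c X)); last by rewrite Pcod cv.
    rewrite iv !cv /=; congr (_, _).
    case: (biso (G Y)) => b1 b2 b3; case: (biso (G X)) => b1' b2' b3'.
    have bn := bnat h; simpl in bn; rewrite hc hd in bn.
    rewrite (act_cmp hD); last by rewrite (f_cod hF) (f_cod hK) hc b1.
    rewrite bn -(act_cmp hD s0 idw idw) ?(act_unit_mor hD) //.
    by rewrite b2' hd.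
Qed.

End Cyl.

Theorem corollary3p14 (C D : pcat) (F : functor C D) (m : injw2)
  (hC : is_pcat C) (hD : is_pcat D)
  (hF : is_functor F) (hFs : preserves_sums F) :
  [/\ is_functor (Fmu F m) /\ preserves_sums (Fmu F m),
      is_pcat (Cyl F m (pc_cat hD)),
      is_pmorph (I1 F m (pc_cat hD)) /\ is_pmorph (I2 F m (pc_cat hD)),
      is_equiv F -> is_equiv (I1 F m (pc_cat hD)) &
      is_equiv (I2 F m (pc_cat hD))].
Proof.
split.
- split; [exact: (Fmu_functor hC hD hF m) | exact: (Fmu_sums hC hD hF hFs m)].
- exact: (push_is_pcat (prod_is_pcat hC hD) hD (Fmu_functor hC hD hF m) (Fmu_sums hC hD hF hFs m)).
- split; [exact: (I1_pmorph hC hD hF hFs m) | exact: (I2_pmorph hC hD hF hFs m)].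
- exact: (I1_equiv hC hD hF hFs m).
- exact: (I2_equiv hC hD hF hFs m).
Qed.
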